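(* The automorphic growth of the Heisenberg group $H(\mathbb{Z})=\langle a,b,c\mid c=[a,b],\ c\text{ is central}\rangle$ is quadratic, i.e. $\alpha_{H(\mathbb{Z})}\sim(n\mapsto n^2)$.
   Context: For a finitely generated group $G$ with finite generating set $\Sigma$, the automorphic growth function sends $n$ to the number of $\operatorname{Aut}(G)$-orbits of $G$ containing an element of word length at most $n$ with respect to $\Sigma$. For non-decreasing non-zero $f,g\colon\mathbb{N}\to\mathbb{N}$ write $f\preccurlyeq g$ if there is $\lambda\in\mathbb{N}\setminus\{0\}$ with $f(n)\le\lambda g(\lambda n+\lambda)+\lambda$ for all $n$, and $f\sim g$ if both hold in each direction; $\alpha_G$ is the $\sim$-class of the automorphic growth function, which is independent of $\Sigma$. *)

(* Defs.v *)
From Stdlib Require Import ZArith List Lia.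
Import ListNotations.
Open Scope Z_scope.

Definition Heis : Type := (Z * Z * Z)%type.

Definition hmul (g h : Heis) : Heis :=
  let '(x, y, z) := g in let '(x', y', z') := h in
  (x + x', y + y', z + z' + x * y').

Definition hone : Heis := (0, 0, 0).

Definition hinv (g : Heis) : Heis :=
  let '(x, y, z) := g in (- x, - y, - z + x * y).

Definition ha : Heis := (1, 0, 0).
Definition hb : Heis := (0, 1, 0).
Definition hc : Heis := hmul (hmul (hinv ha) (hinv hb)) (hmul ha hb).

Definition gens : list Heis :=
  [ha; hinv ha; hb; hinv hb; hc; hinv hc].

Definition eval_word (w : list Heis) : Heis := fold_right hmul hone w.

Definition in_ball (n : nat) (g : Heis) : Prop :=
  exists w : list Heis, (length w <= n)%nat /\
    (forall s, In s w -> In s gens) /\ eval_word w = g.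

Definition is_aut (f : Heis -> Heis) : Prop :=
  (forall g h, f (hmul g h) = hmul (f g) (f h)) /\
  exists f' : Heis -> Heis, (forall g, f' (f g) = g) /\ (forall g, f (f' g) = g).

Definition aut_equiv (g h : Heis) : Prop :=
  exists f, is_aut f /\ f g = h.

(** [orbit_count n k]: exactly k Aut(H)-orbits contain an element of
    word length <= n (k representatives, pairwise in distinct orbits,
    covering all orbits meeting the ball). *)
Definition orbit_count (n k : nat) : Prop :=
  exists reps : list Heis,
    length reps = k /\
    (forall r, In r reps -> in_ball n r) /\
    NoDup reps /\
    (forall i j, (i < k)%nat -> (j < k)%nat -> i <> j ->
       ~ aut_equiv (nth i reps hone) (nth j reps hone)) /\
    (forall g, in_ball n g -> exists r, In r reps /\ aut_equiv g r).

Definition is_automorphic_growth (f : nat -> nat) : Prop :=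
  forall n, orbit_count n (f n).

Definition gdom (f g : nat -> nat) : Prop :=
  exists lam : nat, (0 < lam)%nat /\
    forall n, (f n <= lam * g (lam * n + lam) + lam)%nat.

Definition gequiv (f g : nat -> nat) : Prop := gdom f g /\ gdom g f.

(* Main.v *)
Require Import Defs.
From Stdlib Require Import ZArith List Lia FinFun Classical ClassicalEpsilon.
Import ListNotations.
Open Scope Z_scope.

Lemma teq (a b c d e f : Z) : a = d -> b = e -> c = f -> (a,b,c) = (d,e,f).
Proof. intros; subst; reflexivity. Qed.

Lemma hmul_assoc g h k : hmul g (hmul h k) = hmul (hmul g h) k.
Proof. destruct g as [[? ?] ?], h as [[? ?] ?], k as [[? ?] ?]; simpl; apply teq; ring. Qed.

Lemma hone_l g : hmul hone g = g.
Proof. destruct g as [[? ?] ?]; simpl; apply teq; ring. Qed.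

Lemma gens_eq : gens = [(1,0,0);(-1,0,0);(0,1,0);(0,-1,0);(0,0,1);(0,0,-1)].
Proof. reflexivity. Qed.

Lemma eval_app w1 w2 : eval_word (w1 ++ w2) = hmul (eval_word w1) (eval_word w2).
Proof.
  induction w1; cbn [app]. symmetry; apply hone_l. change (hmul a (eval_word (w1 ++ w2)) = hmul (hmul a (eval_word w1)) (eval_word w2)). now rewrite IHw1, hmul_assoc.
Qed.

Lemma eval_rep p q r k : p * q = 0 ->
  eval_word (repeat (p,q,r) k) = (Z.of_nat k * p, Z.of_nat k * q, Z.of_nat k * r).
Proof.
  intro H. induction k. reflexivity. rewrite Nat2Z.inj_succ. simpl.
  rewrite IHk. apply teq; nia.
Qed.

Lemma ball_bound w : (forall s, In s w -> In s gens) ->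
  forall x y z, eval_word w = (x,y,z) ->
  Z.abs x + Z.abs y <= Z.of_nat (length w) /\ Z.abs z <= Z.of_nat (length w) * Z.of_nat (length w).
Proof.
  induction w as [|a w IH]; intros Hw x y z He.
  - simpl in He. injection He; intros; subst. simpl. lia.
  - change (hmul a (eval_word w) = (x,y,z)) in He. destruct a as [[p q] r]. destruct (eval_word w) as [[x0 y0] z0] eqn:E.
    destruct (IH (fun s Hs => Hw s (or_intror Hs)) x0 y0 z0 eq_refl) as [H1 H2].
    assert (Ha := Hw (p,q,r) (or_introl eq_refl)). rewrite gens_eq in Ha.
    simpl length. rewrite Nat2Z.inj_succ.
    set (L := Z.of_nat (length w)) in *.
    simpl in He. injection He as <- <- <-.
    simpl in Ha; repeat destruct Ha as [Ha|Ha]; try contradiction;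
    injection Ha as <- <- <-; split; try lia.
Qed.

Lemma in_ball_bound n x y z : in_ball n (x,y,z) ->
  Z.abs x + Z.abs y <= Z.of_nat n /\ Z.abs z <= Z.of_nat n * Z.of_nat n.
Proof.
  intros [w [Hl [Hg He]]]. destruct (ball_bound w Hg x y z He). split; nia.
Qed.

Lemma aut_refl g : aut_equiv g g.
Proof. exists (fun x => x). split; [split|]; auto. exists (fun x => x); auto. Qed.

Lemma aut_comp f1 f2 : is_aut f1 -> is_aut f2 -> is_aut (fun x => f2 (f1 x)).
Proof.
  intros [h1 [g1 [a1 b1]]] [h2 [g2 [a2 b2]]]. split.
  - intros. now rewrite h1, h2.
  - exists (fun x => g1 (g2 x)). split; intros; [now rewrite a2, a1|now rewrite b1, b2].
Qed.

Lemma aut_inv f : is_aut f -> exists f', is_aut f' /\ forall g, f' (f g) = g.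
Proof.
  intros [h [g [a b]]]. exists g. split; [split|]; auto.
  - intros x y. rewrite <- (b x), <- (b y), <- h, !a. reflexivity.
  - exists f; auto.
Qed.

Lemma aut_trans g h k : aut_equiv g h -> aut_equiv h k -> aut_equiv g k.
Proof.
  intros [f1 [A1 E1]] [f2 [A2 E2]]. exists (fun x => f2 (f1 x)). split.
  apply aut_comp; auto. now rewrite E1.
Qed.

Lemma aut_sym g h : aut_equiv g h -> aut_equiv h g.
Proof.
  intros [f [A E]]. destruct (aut_inv f A) as [f' [A' E']]. exists f'. split; auto.
  now rewrite <- E.
Qed.

Definition T (x : Z) : Z := x * (x - 1) / 2.

Lemma T2 x : 2 * T x = x * (x - 1).
Proof. unfold T. destruct (Z.Even_or_Odd x) as [[m ->]|[m ->]].
- replace (2*m*(2*m-1)) with ((m*(2*m-1))*2) by ring. rewrite Z.div_mul by lia. ring.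
- replace ((2*m+1)*(2*m+1-1)) with ((m*(2*m+1))*2) by ring. rewrite Z.div_mul by lia. ring.
Qed.

Lemma T_add a b : T (a + b) = T a + T b + a * b.
Proof.
  apply (Z.mul_reg_l _ _ 2); [lia|]. rewrite !Z.mul_add_distr_l, !T2. ring.
Qed.

Definition lift (p q r s : Z) (g : Heis) : Heis :=
  let '(x,y,z) := g in (p*x+q*y, r*x+s*y, z + p*r*T x + q*s*T y + q*r*x*y).
Definition linv (p q r s : Z) (g : Heis) : Heis :=
  let '(X,Y,Z) := g in
  (s*X - q*Y, -r*X + p*Y,
   Z - (p*r*T (s*X - q*Y) + q*s*T (-r*X + p*Y) + q*r*(s*X - q*Y)*(-r*X + p*Y))).

Lemma lift_aut p q r s : p * s - q * r = 1 -> is_aut (lift p q r s).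
Proof.
  intro E. split.
  - intros [[x y] z] [[x' y'] z']. unfold lift, hmul. apply teq; [ring|ring|].
    rewrite !T_add.
    match goal with |- ?A = ?B => assert (HD: A - B = (1 + q*r - p*s)*(x*y')) by ring end.
    assert (H0 : 1 + q*r - p*s = 0) by lia. rewrite H0 in HD. lia.
  - exists (linv p q r s). split.
    + intros [[x y] z]. unfold lift, linv.
      assert (Hx : s * (p * x + q * y) - q * (r * x + s * y) = x).
      { transitivity ((p*s - q*r)*x); [ring|rewrite E; ring]. }
      assert (Hy : - r * (p * x + q * y) + p * (r * x + s * y) = y).
      { transitivity ((p*s - q*r)*y); [ring|rewrite E; ring]. }
      rewrite Hx, Hy. apply teq; ring.
    + intros [[X Y] Z]. unfold lift, linv.
      apply teq.
      * transitivity ((p*s - q*r)*X); [ring|rewrite E; ring].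
      * transitivity ((p*s - q*r)*Y); [ring|rewrite E; ring].
      * ring.
Qed.

Definition cent (a b : Z) (g : Heis) : Heis := let '(x,y,z) := g in (x, y, z + a*x + b*y).

Lemma cent_aut a b : is_aut (cent a b).
Proof.
  split.
  - intros [[x y] z] [[x' y'] z']. simpl. apply teq; ring.
  - exists (cent (-a) (-b)). split; intros [[x y] z]; simpl; apply teq; ring.
Qed.
Lemma teq_inv (a b c d e f : Z) : (a,b,c) = (d,e,f) -> a = d /\ b = e /\ c = f.
Proof. intro H. inversion H. auto. Qed.
Ltac tinj H := apply teq_inv in H; destruct H as [? [? ?]].
Ltac hsg := unfold hmul, hone; cbv beta iota zeta.
Ltac hs H := unfold hmul, hone in H; cbv beta iota zeta in H.

Lemma cz_central t g : hmul (0,0,t) g = hmul g (0,0,t).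
Proof. destruct g as [[x y] z]. hsg. apply teq; ring. Qed.

Lemma central_char e : (forall h, hmul e h = hmul h e) -> exists t, e = (0,0,t).
Proof.
  intro H. destruct e as [[x y] z]. pose proof (H (1,0,0)) as H1. pose proof (H (0,1,0)) as H2.
  unfold hmul in H1, H2; cbv beta iota zeta in H1, H2. tinj H1; tinj H2. exists z. apply teq; lia.
Qed.

Lemma idem_one u : hmul u u = u -> u = hone.
Proof. destruct u as [[x y] z]. unfold hmul; cbv beta iota zeta. intro H; tinj H. unfold hone. apply teq; nia. Qed.

Lemma aut_center f : is_aut f -> exists d, (d = 1 \/ d = -1) /\ forall t, f (0,0,t) = (0,0,t*d).
Proof.
  intros HA. pose proof HA as [Hh [f' [A B]]].
  assert (Hc : forall h, hmul (f (0,0,1)) h = hmul h (f (0,0,1))).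
  { intro h. rewrite <- (B h), <- !Hh, cz_central. reflexivity. }
  destruct (central_char _ Hc) as [d Hd].
  assert (H1 : f hone = hone).
  { apply idem_one. rewrite <- Hh. reflexivity. }
  assert (Hpos : forall k : nat, f (0,0,Z.of_nat k) = (0,0,Z.of_nat k * d)).
  { induction k. exact H1.
    replace (0,0,Z.of_nat (S k)) with (hmul (0,0,1) (0,0,Z.of_nat k)) by (hsg; apply teq; lia).
    rewrite Hh, Hd, IHk. hsg. apply teq; lia. }
  assert (Hall : forall t, f (0,0,t) = (0,0,t*d)).
  { intro t. destruct (Z_le_gt_dec 0 t).
    - rewrite <- (Z2Nat.id t) by lia. apply Hpos.
    - assert (E : hmul (0,0,t) (0,0,-t) = hone) by (hsg; apply teq; ring).
      rewrite <- (Z2Nat.id (-t)) in E by lia.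
      apply (f_equal f) in E. rewrite Hh, Hpos, H1 in E.
      destruct (f (0,0,t)) as [[a b] c]. hs E. tinj E.
      apply teq; nia. }
  exists d. split; auto.
  assert (Hg : forall h, hmul (f' (0,0,1)) h = hmul h (f' (0,0,1))).
  { intro h. rewrite <- (A (hmul _ h)), <- (A (hmul h _)), !Hh, B, cz_central. reflexivity. }
  destruct (central_char _ Hg) as [t0 Ht0].
  assert (E := B (0,0,1)). rewrite Ht0, Hall in E. tinj E.
  apply (Z.eq_mul_1 d t0). lia.
Qed.

Lemma central_inv m1 m2 : 0 <= m1 -> 0 <= m2 -> aut_equiv (0,0,m1) (0,0,m2) -> m1 = m2.
Proof.
  intros H1 H2 [f [HA E]]. destruct (aut_center f HA) as [d [Hd Hf]].
  rewrite Hf in E. tinj E. destruct Hd; subst; lia.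
Qed.

Lemma reduce x y z : ~ (x = 0 /\ y = 0) -> exists d r,
  1 <= d <= Z.abs x + Z.abs y /\ 0 <= r < d /\ aut_equiv (x,y,z) (d,0,r).
Proof.
  intro Hxy. set (d := Z.gcd x y).
  assert (Hd : 0 < d).
  { pose proof (Z.gcd_nonneg x y). pose proof (Z.gcd_eq_0 x y). fold d in H, H0. lia. }
  destruct (Z.gcd_bezout x y d eq_refl) as [u [v Hb]].
  destruct (Z.gcd_divide_l x y) as [x' Hx']. destruct (Z.gcd_divide_r x y) as [y' Hy'].
  fold d in Hx', Hy'. clearbody d.
  assert (Hdet : u * x' + v * y' = 1).
  { assert (Hm : (u*x' + v*y' - 1) * d = 0) by (subst x y; nia).
    apply Z.mul_eq_0 in Hm. lia. }
  destruct (lift u v (-y') x' (x,y,z)) as [[X Y] Z1] eqn:EL.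
  assert (Heq1 : aut_equiv (x,y,z) (X,Y,Z1)).
  { exists (lift u v (-y') x'). split; auto. apply lift_aut. lia. }
  unfold lift in EL. tinj EL. rename H into EX, H0 into EY, H1 into EZ.
  assert (X = d) by (subst X; rewrite Hx', Hy'; nia).
  assert (Y = 0) by (subst Y; rewrite Hx', Hy'; ring).
  subst X Y.
  exists d, (Z1 mod d). split; [|split].
  - split; [lia|]. destruct (Z.eq_dec x' 0) as [E0|E0].
    + assert (y' <> 0) by (intro; apply Hxy; subst; lia).
      rewrite Hx', Hy', !Z.abs_mul, (Z.abs_eq d) by lia.
      assert (1 <= Z.abs y') by lia. nia.
    + rewrite Hx', Hy', !Z.abs_mul, (Z.abs_eq d) by lia.
      assert (1 <= Z.abs x') by lia. nia.
  - apply Z.mod_pos_bound; lia.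
  - apply (aut_trans _ _ _ Heq1). exists (cent (-(Z1/d)) 0). split. apply cent_aut.
    unfold cent; cbv beta iota zeta. apply teq; [lia|lia|]. rewrite Z.mod_eq by lia. rewrite H, H0. ring.
Qed.

Definition Ccent (n : nat) : list Heis :=
  map (fun i => (0, 0, Z.of_nat i - Z.of_nat (n*n))) (seq 0 (2*(n*n)+1)).
Definition Cnon (n : nat) : list Heis :=
  map (fun pr : nat * nat => (Z.of_nat (fst pr), 0, Z.of_nat (snd pr))) (list_prod (seq 1 n) (seq 0 n)).
Definition Cand (n : nat) : list Heis := Ccent n ++ Cnon n.

Lemma Cand_length n : length (Cand n) = (3 * (n*n) + 1)%nat.
Proof. unfold Cand, Ccent, Cnon. rewrite length_app, !length_map, length_prod, !length_seq. lia. Qed.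

Lemma cover n g : in_ball n g -> exists c, In c (Cand n) /\ aut_equiv g c.
Proof.
  destruct g as [[x y] z]. intro Hb. destruct (in_ball_bound _ _ _ _ Hb) as [B1 B2].
  rewrite <- Nat2Z.inj_mul in B2.
  unfold Cand. destruct (classic (x = 0 /\ y = 0)) as [[-> ->]|Hn].
  - exists (0,0,z). split; [|apply aut_refl]. apply in_or_app; left.
    unfold Ccent. apply in_map_iff. exists (Z.to_nat (z + Z.of_nat (n*n))). split.
    + apply teq; lia.
    + apply in_seq. lia.
  - destruct (reduce x y z Hn) as [d [r [H1 [H2 H3]]]].
    exists (d,0,r). split; auto. apply in_or_app; right.
    unfold Cnon. apply in_map_iff. exists (Z.to_nat d, Z.to_nat r). split.
    + cbn [fst snd]. apply teq; lia.
    + apply in_prod_iff. split; apply in_seq; lia.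
Qed.

Lemma build (P : Heis -> Prop) (L : list Heis) : exists reps,
  (forall r, In r reps -> P r) /\ NoDup reps /\
  (forall r r', In r reps -> In r' reps -> aut_equiv r r' -> r = r') /\
  (forall g, P g -> (exists c, In c L /\ aut_equiv g c) -> exists r, In r reps /\ aut_equiv g r).
Proof.
  induction L as [|c L IH].
  - exists nil. split; [|split; [|split]]; try (intros; contradiction).
    constructor. intros g _ [c [[] _]].
  - destruct IH as [reps [HP [HN [HU HC]]]].
    destruct (classic (exists g, P g /\ aut_equiv g c /\ forall r, In r reps -> ~ aut_equiv g r))
      as [[g [Pg [Hgc Hn]]]|Hno].
    + exists (g :: reps). split; [|split; [|split]].
      * intros r [<-|Hr]; auto.
      * constructor; auto. intro Hg. exact (Hn g Hg (aut_refl g)).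
      * intros r r' [<-|Hr] [<-|Hr'] He; auto.
        -- exfalso; exact (Hn r' Hr' He).
        -- exfalso; exact (Hn r Hr (aut_sym _ _ He)).
      * intros h Ph [c' [[<-|Hc'] Hhc]].
        -- exists g. split; [left; auto|]. exact (aut_trans _ _ _ Hhc (aut_sym _ _ Hgc)).
        -- destruct (HC h Ph (ex_intro _ c' (conj Hc' Hhc))) as [r [Hr Hhr]].
           exists r; split; [right|]; auto.
    + exists reps. split; [|split; [|split]]; auto.
      intros h Ph [c' [[<-|Hc'] Hhc]].
      * apply NNPP. intro Hnr. apply Hno. exists h. split; [|split]; auto.
        intros r Hr Hhr. apply Hnr. exists r; auto.
      * apply HC; eauto.
Qed.

Definition heq_dec : forall x y : Heis, {x = y} + {x <> y}.
Proof. repeat decide equality; apply Z.eq_dec. Defined.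

Lemma card_le (R : Heis -> Heis -> Prop) (l1 l2 : list Heis) : NoDup l1 ->
  (forall x, In x l1 -> exists y, In y l2 /\ R x y) ->
  (forall x x' y, In x l1 -> In x' l1 -> R x y -> R x' y -> x = x') ->
  (length l1 <= length l2)%nat.
Proof.
  revert l2. induction l1 as [|a l1 IH]; intros l2 HN Hex Hu.
  - simpl; lia.
  - inversion HN as [|? ? Ha HN']; subst.
    destruct (Hex a (or_introl eq_refl)) as [y [Hy Ray]].
    assert (Hl := remove_length_lt heq_dec l2 y Hy).
    assert (length l1 <= length (remove heq_dec y l2))%nat.
    { apply IH; auto.
      - intros x Hx. destruct (Hex x (or_intror Hx)) as [y' [Hy' Rxy']].
        exists y'. split; auto. apply in_in_remove; auto.
        intros ->. assert (x = a) by (apply (Hu x a y); auto; [right|left]; auto).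
        subst; contradiction.
      - intros x x' y0 Hx Hx' R1 R2. apply (Hu x x' y0); auto; right; auto. }
    simpl. lia.
Qed.

Lemma orbit_count_exists n : exists k, orbit_count n k.
Proof.
  destruct (build (in_ball n) (Cand n)) as [reps [HP [HN [HU HC]]]].
  exists (length reps), reps. split; [reflexivity|split; [auto|split; [auto|split]]].
  - intros i j Hi Hj Hij He. apply Hij.
    apply (proj1 (NoDup_nth reps hone) HN); auto.
    apply HU; auto; apply nth_In; auto.
  - intros g Hg. apply HC; auto. apply cover; auto.
Qed.

Lemma upper n k : orbit_count n k -> (k <= 3 * (n*n) + 1)%nat.
Proof.
  intros [reps [Hl [HB [HN [HI HC]]]]]. rewrite <- Cand_length, <- Hl.
  apply (card_le aut_equiv); auto.
  - intros x Hx. apply cover; auto.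
  - intros x x' y Hx Hx' R1 R2.
    destruct (In_nth _ _ hone Hx) as [i [Hi Ei]]. destruct (In_nth _ _ hone Hx') as [j [Hj Ej]].
    destruct (Nat.eq_dec i j) as [->|Hij]. congruence.
    exfalso. apply (HI i j); try lia. rewrite Ei, Ej. exact (aut_trans _ _ _ R1 (aut_sym _ _ R2)).
Qed.

Lemma cz_ball (K i : nat) : (0 < K)%nat -> (i <= K * K)%nat -> in_ball (5 * K) (0, 0, Z.of_nat i).
Proof.
  intros HK Hi. set (q := (i / K)%nat). set (r := (i mod K)%nat).
  assert (Hd : i = (K * q + r)%nat) by apply Nat.div_mod_eq.
  assert (Hr : (r < K)%nat) by (apply Nat.mod_upper_bound; lia).
  assert (Hq : (q <= K)%nat) by nia.
  exists (repeat (1,0,0) K ++ repeat (0,1,0) q ++ repeat (-1,0,0) K ++ repeat (0,-1,0) q ++ repeat (0,0,1) r).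
  split; [|split].
  - rewrite !length_app, !repeat_length. lia.
  - intros s Hs. rewrite gens_eq. repeat (apply in_app_or in Hs; destruct Hs as [Hs|Hs]);
    try apply repeat_spec in Hs; subst s; simpl; tauto.
  - rewrite !eval_app, !eval_rep by lia. hsg. apply teq; nia.
Qed.

Lemma lower n k : orbit_count (5 * n + 5) k -> (n * n <= k)%nat.
Proof.
  intros [reps [Hl [HB [HN [HI HC]]]]].
  set (l1 := map (fun i => (0, 0, Z.of_nat i) : Heis) (seq 0 ((n+1)*(n+1)+1))).
  assert (length l1 <= length reps)%nat.
  { apply (card_le aut_equiv).
    - apply Injective_map_NoDup; [|apply seq_NoDup].
      intros a b E. apply teq_inv in E. lia.
    - intros x Hx. apply in_map_iff in Hx. destruct Hx as [i [<- Hi]]. apply in_seq in Hi.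
      destruct (HC (0,0,Z.of_nat i)) as [r [Hr Er]]; eauto.
      replace (5 * n + 5)%nat with (5 * (n+1))%nat by lia. apply cz_ball; lia.
    - intros x x' y Hx Hx' R1 R2.
      apply in_map_iff in Hx. destruct Hx as [i [<- Hi]].
      apply in_map_iff in Hx'. destruct Hx' as [j [<- Hj]].
      assert (Z.of_nat i = Z.of_nat j).
      { apply central_inv; try lia. exact (aut_trans _ _ _ R1 (aut_sym _ _ R2)). }
      rewrite H; reflexivity. }
  unfold l1 in H. rewrite length_map, length_seq in H. lia.
Qed.

Theorem mainTheorem3 :
  (exists f : nat -> nat, is_automorphic_growth f) /\
  (forall f : nat -> nat, is_automorphic_growth f ->
     gequiv f (fun n => (n * n)%nat)).
Proof.
  split.
  - exists (fun n => proj1_sig (constructive_indefinite_description _ (orbit_count_exists n))).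
    intro n. exact (proj2_sig (constructive_indefinite_description _ (orbit_count_exists n))).
  - intros f Hf. split.
    + exists 3%nat. split; [lia|]. intro n. pose proof (upper n (f n) (Hf n)). nia.
    + exists 5%nat. split; [lia|]. intro n. pose proof (lower n _ (Hf (5 * n + 5)%nat)). lia.
Qed.
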